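(* Let $n$ be an odd positive integer, and let $a,b$ be distinct integers with $0<a,b<n$, $b$ odd and $a$ even, such that $G=C_{2n}(a,b,n)$ is a connected $5$-regular circulant graph. Then $G$ admits a factorization (in the sense described in the context) as a Cartesian product of a $3$-regular circulant graph and a $2$-regular circulant graph if and only if there exist positive integers $p,q$ with $p>2$, $1<q<n$, $p\mid a$, $q\mid b$, $pq=2n$ and $\gcd(p,q)=1$.
   Context: For an integer $m$ and a set $R$ of positive integers each at most $m/2$, the circulant graph $C_m(R)$ has vertex set $\{0,1,\dots,m-1\}$, with $i$ and $j$ adjacent iff $\min(|i-j|,\,m-|i-j|)\in R$; it is regular of degree $2|R|$ if $m/2\notin R$ and of degree $2|R|-1$ if $m/2\in R$. $C_{2n}(a,b,n)$ denotes the circulant graph on $2n$ vertices with jump set $\{a,b,n\}$. The Cartesian product $G_1\square G_2$ has vertex set $V(G_1)\times V(G_2)$, with $(u_1,v_1)\sim(u_2,v_2)$ iff either $u_1=u_2$ and $v_1v_2\in E(G_2)$, or $v_1=v_2$ and $u_1u_2\in E(G_1)$. The factorization theorem for circulant graphs states: if $p,q$ are relatively prime, $R\subseteq[1,p/2]$, $S\subseteq[1,q/2]$ and $T=qR\cup pS$ (where $qR=\{qr:r\in R\}$, $pS=\{ps:s\in S\}$), then $C_{pq}(T)\cong C_p(R)\square C_q(S)$. ''$G=C_{2n}(a,b,n)$ admits a factorization as a Cartesian product of a $3$-regular and a $2$-regular circulant graph'' means: there exist relatively prime integers $p,q>1$ with $pq=2n$ and sets of integers $R\subseteq[1,p/2]$,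 $S\subseteq[1,q/2]$ with $qR\cup pS=\{a,b,n\}$, such that $C_p(R)$ is $3$-regular and $C_q(S)$ is $2$-regular (so that $G\cong C_p(R)\square C_q(S)$ by the factorization theorem). *)

(* Defs.v *)
From mathcomp Require Import all_boot.
Set Implicit Arguments. Unset Strict Implicit. Unset Printing Implicit Defensive.

Definition circ_dist (i j m : nat) : nat :=
  let d := if i <= j then j - i else i - j in minn d (m - d).

Definition circ_adj (m : nat) (R : pred nat) : rel 'I_m :=
  fun i j => R (circ_dist i j m).

Definition circ_regular (m : nat) (R : pred nat) (k : nat) : Prop :=
  forall i : 'I_m, #|[set j : 'I_m | circ_adj R i j]| = k.

Definition circ_connected (m : nat) (R : pred nat) : Prop :=
  forall i j : 'I_m, connect (circ_adj R) i j.

Definition jumps3 (a b n : nat) : pred nat := [pred x | (x == a) || (x == b) || (x == n)].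

Definition jump_set_in (R : pred nat) (m : nat) : Prop :=
  forall r, R r -> 0 < r /\ 2 * r <= m.

Definition scaled_union_eq (q : nat) (R : pred nat) (p : nat) (S : pred nat)
    (T : pred nat) : Prop :=
  forall x, T x <-> ((exists2 r, R r & x = q * r) \/ (exists2 s, S s & x = p * s)).

(* C_{2n}(a,b,n) admits a factorization as a Cartesian product of a 3-regular
   and a 2-regular circulant graph, via the factorization theorem. *)
Definition admits_3_2_factorization (n a b : nat) : Prop :=
  exists p q : nat, exists R S : pred nat,
    [/\ 1 < p, 1 < q, coprime p q & p * q = 2 * n] /\
    [/\ jump_set_in R p, jump_set_in S q,
        scaled_union_eq q R p S (jumps3 a b n),
        circ_regular p R 3 & circ_regular q S 2].

(* Main.v *)
Require Import Defs.
From mathcomp Require Import all_boot zify.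

Lemma card_by_vals n (S : {set 'I_n}) (s : seq nat) :
  uniq s -> all (fun x => x < n) s ->
  (forall j : 'I_n, (j \in S) = (val j \in s)) -> #|S| = size s.
Proof.
move=> us alls HS. rewrite cardE -(size_map val).
apply/perm_size/uniq_perm => //.
  rewrite map_inj_uniq ?enum_uniq //; exact: val_inj.
move=> x; apply/mapP/idP => [[j]|xs].
  by rewrite mem_enum HS => ? ->.
have xn : x < n by move/allP: alls => /(_ x xs).
by exists (Ordinal xn); rewrite ?mem_enum ?HS.
Qed.

Lemma card_ge n (S : {set 'I_n}) (s : seq nat) :
  uniq s -> all (fun x => x < n) s ->
  (forall j : 'I_n, val j \in s -> j \in S) -> size s <= #|S|.
Proof.
move=> us alls HS.
rewrite -(@card_by_vals n [set j : 'I_n | val j \in s] s us alls); last first.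
  by move=> j; rewrite inE.
apply: subset_leq_card; apply/subsetP => j; rewrite inE; exact: HS.
Qed.

Lemma nb_lower p (R : pred nat) k (Hp : 0 < p) s :
  circ_regular p R k -> uniq s ->
  (forall x, x \in s -> x < p /\ R (circ_dist 0 x p)) -> size s <= k.
Proof.
move=> H us Hs. rewrite -(H (Ordinal Hp)).
apply: card_ge => //.
  by apply/allP => x /Hs [].
move=> j /Hs [_]; by rewrite inE /circ_adj.
Qed.

Lemma cd0 p x : circ_dist 0 x p = minn x (p - x).
Proof. by rewrite /circ_dist leq0n subn0. Qed.

Lemma reg3 M r h : 0 < r -> 2*r < M -> 2*h = M ->
  circ_regular M [pred x | (x == r) || (x == h)] 3.
Proof.
move=> r0 rM hM i.
pose x1 := (if i + r < M then i + r else i + r - M).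
pose x2 := (if r <= i then i - r else i + M - r).
pose x3 := (if h <= i then i - h else i + h).
have iM := ltn_ord i.
have [E [U A]] : (forall j : 'I_M, ((circ_dist i j M == r) || (circ_dist i j M == h)) = (val j \in [:: x1; x2; x3])) /\ uniq [:: x1; x2; x3] /\ all (fun x => x < M) [:: x1;x2;x3].
  split; last first.
    rewrite /x1 /x2 /x3 /= !inE.
    case: ifP; case: ifP; case: ifP => *; split; lia.
  move=> j; have jM := ltn_ord j.
  rewrite /x1 /x2 /x3 /circ_dist /= !inE.
  case: ifP; case: ifP; case: ifP; case: ifP => *; lia.
rewrite (@card_by_vals M _ [:: x1; x2; x3]) //.
by move=> j; rewrite inE /circ_adj /= E.
Qed.

Lemma reg2 M s : 0 < s -> 2*s < M ->
  circ_regular M [pred x | x == s] 2.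
Proof.
move=> r0 rM i.
pose x1 := (if i + s < M then i + s else i + s - M).
pose x2 := (if s <= i then i - s else i + M - s).
have iM := ltn_ord i.
have [E [U A]] : (forall j : 'I_M, (circ_dist i j M == s) = (val j \in [:: x1; x2])) /\ uniq [:: x1; x2] /\ all (fun x => x < M) [:: x1;x2].
  split; last first.
    rewrite /x1 /x2 /= !inE.
    case: ifP; case: ifP => *; split; lia.
  move=> j; have jM := ltn_ord j.
  rewrite /x1 /x2 /circ_dist /= !inE.
  case: ifP; case: ifP; case: ifP => *; lia.
rewrite (@card_by_vals M _ [:: x1; x2]) //.
by move=> j; rewrite inE /circ_adj /= E.
Qed.

Lemma inR (R : pred nat) p r : R r -> 0 < r -> 2 * r <= p ->
  (r < p /\ R (circ_dist 0 r p)) /\ (p - r < p /\ R (circ_dist 0 (p - r) p)).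
Proof.
move=> Rr r0 rp; rewrite !cd0.
have -> : minn r (p - r) = r by lia.
have -> : minn (p - r) (p - (p - r)) = r by lia.
split; split => //; lia.
Qed.

Theorem theorem30 (n a b : nat) :
  odd n -> 0 < n ->
  a != b -> 0 < a < n -> 0 < b < n -> odd b -> ~~ odd a ->
  circ_connected (2 * n) (jumps3 a b n) ->
  circ_regular (2 * n) (jumps3 a b n) 5 ->
  admits_3_2_factorization n a b <->
  (exists p q : nat,
     [/\ 2 < p, 1 < q < n, p %| a & q %| b] /\ p * q = 2 * n /\ coprime p q).
Proof.
move=> on n0 ab /andP[a0 an] /andP[b0 bn] ob ea _ _.
split.
- move=> [p [q [R [S [[p1 q1 cpq pq] [HR HS Hu H3 H2]]]]]].
  have p0 : 0 < p by lia.
  have q0 : 0 < q by lia.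
  have Ja : jumps3 a b n a by rewrite /jumps3 /= eqxx.
  have Jb : jumps3 a b n b by rewrite /jumps3 /= eqxx orbT.
  have Jn : jumps3 a b n n by rewrite /jumps3 /= eqxx !orbT.
  have e2n : odd (2 * n) = false by rewrite oddM.
  case op : (odd p).
  + have oq : odd q = false.
      by move: e2n; rewrite -pq oddM op.
    have [[rb Rb Eb]|[sb Sb Eb]] := proj1 (Hu b) Jb.
      by move: ob; rewrite Eb oddM oq.
    have [[rn Rn En]|[sn Sn En]] := proj1 (Hu n) Jn.
      by move: on; rewrite En oddM oq.
    have sn2 : 2 * sn = q.
      have : p * (2 * sn) == p * q by rewrite mulnCA -En pq.
      by rewrite eqn_pmul2l // => /eqP.
    have sbn : sb != sn by apply/eqP => E; move: bn; rewrite Eb En E; lia.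
    have [sb0 sbq] := HS sb Sb.
    have := @nb_lower q S 2 q0 [:: sb; q - sb; sn] H2.
    have [[? ?] [? ?]] := @inR S q sb Sb sb0 sbq.
    have [[? ?] _] := @inR S q sn Sn (proj1 (HS sn Sn)) (proj2 (HS sn Sn)).
    rewrite /= !inE => H; exfalso; have : 3 <= 2; last by [].
    apply: H; first lia.
    by move=> x; rewrite !inE => /or3P[] /eqP ->.
  + have [[rb Rb Eb]|[sb Sb Eb]] := proj1 (Hu b) Jb; last first.
      by move: ob; rewrite Eb oddM op.
    have [[rn Rn En]|[sn Sn En]] := proj1 (Hu n) Jn; last first.
      by move: on; rewrite En oddM op.
    have rn2 : 2 * rn = p.
      have : q * (2 * rn) == q * p by rewrite mulnCA -En -pq mulnC.
      by rewrite eqn_pmul2l // => /eqP.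
    have rbn : rb != rn by apply/eqP => E; move: bn; rewrite Eb En E; lia.
    have [rb0 rbp] := HR rb Rb.
    have [[ra Ra Ea]|[sa Sa Ea]] := proj1 (Hu a) Ja.
      have ran : ra != rn by apply/eqP => E; move: an; rewrite Ea En E; lia.
      have rab : ra != rb by apply/eqP => E; move: ab; rewrite Ea Eb E eqxx.
      have [ra0 rap] := HR ra Ra.
      have := @nb_lower p R 3 p0 [:: ra; p - ra; rb; p - rb] H3.
      have [[? ?] [? ?]] := @inR R p rb Rb rb0 rbp.
      have [[? ?] [? ?]] := @inR R p ra Ra ra0 rap.
      rewrite /= !inE => H; exfalso; have : 4 <= 3; last by [].
      apply: H; first lia.
      by move=> x; rewrite !inE => /or4P[] /eqP ->.
    exists p, q; split; last by [].
    have rn2' : 2 <= rn by lia.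
    have : q * 2 <= q * rn by rewrite leq_pmul2l.
    move=> qrn.
    split; first lia.
    * apply/andP; split => //; lia.
    * by apply/dvdnP; exists sa; rewrite Ea mulnC.
    * by apply/dvdnP; exists rb; rewrite Eb mulnC.
- move=> [p [q [[p2 /andP[q1 qn] /dvdnP[ka Ha] /dvdnP[kb Hb]] [pq cpq]]]].
  have oq : odd q by move: ob; rewrite Hb oddM => /andP[].
  have ep : ~~ odd p.
    apply/negP => op; have : odd (p * q) by rewrite oddM op oq.
    by rewrite pq oddM.
  have [h Hh] : exists h, p = 2 * h.
    exists (p./2); have := odd_double_half p; rewrite (negbTE ep) -muln2; lia.
  have q0 : 0 < q by lia.
  have h0 : 0 < h by lia.
  have nqh : n = h * q by move: pq; rewrite Hh -mulnA; lia.
  have kb0 : 0 < kb by move: b0; rewrite Hb muln_gt0 => /andP[].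
  have ka0 : 0 < ka by move: a0; rewrite Ha muln_gt0 => /andP[].
  have kbh : kb < h by rewrite -(ltn_pmul2r q0) -Hb -nqh.
  have kaq : 2 * ka < q.
    have : ka * p < h * q by rewrite -Ha -nqh.
    by rewrite Hh mulnA (mulnC ka) (mulnC h) ltn_pmul2r.
  exists p, q, [pred x | (x == kb) || (x == h)], [pred x | x == ka].
  split; first by split => //; lia.
  split.
  + move=> x /= /orP[] /eqP ->; lia.
  + move=> x /= /eqP ->; lia.
  + move=> x; rewrite /jumps3 /= -!orbA; split.
      case/or3P => /eqP ->.
      * by right; exists ka => //; lia.
      * by left; exists kb => //; lia.
      * by left; exists h => //; lia.
    case=> [[r /orP[] /eqP -> ->]|[s /eqP -> ->]]; apply/or3P.
      * by constructor 2; apply/eqP; lia.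
      * by constructor 3; apply/eqP; lia.
      * by constructor 1; apply/eqP; lia.
  + apply: reg3; lia.
  + apply: reg2; lia.
Qed.
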